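(* Let $G$ be a graph with diameter $h$ and with hyperbolicity $\delta(G)=h$. Then for each quadruple $a,b,c,d\in V(G)$ with $\delta(a,b,c,d)=h$, exactly two disjoint pairs among $a,b,c,d$ are at distance $h$ and all the other pairs are at distance $h/2$.
   Context: For a graph $G=(V,E)$, $\mathrm{dist}(x,y)$ denotes the length of a shortest $x$-$y$ path ($\infty$ if none exists). For $a,b,c,d\in V$ let $D_1=\mathrm{dist}(a,b)+\mathrm{dist}(c,d)$, $D_2=\mathrm{dist}(a,c)+\mathrm{dist}(b,d)$, $D_3=\mathrm{dist}(a,d)+\mathrm{dist}(b,c)$, and define $\delta(a,b,c,d)=|D_i-D_j|$ where $\{i,j,k\}=\{1,2,3\}$ and $D_k\le\min\{D_i,D_j\}$ (i.e., the difference of the two largest of the three sums). The hyperbolicity of $G$ is $\delta(G)=\max_{a,b,c,d\in V}\delta(a,b,c,d)$. *)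

(* Defs.v *)
(* Finite simple graphs as symmetric irreflexive relations. *)
From mathcomp Require Import all_boot.
Set Implicit Arguments. Unset Strict Implicit. Unset Printing Implicit Defensive.

Section Graph.
Variables (T : finType) (e : rel T).

Definition walkb (k : nat) (x y : T) : bool :=
  [exists p : k.-tuple T, path e x p && (last x p == y)].

(* Every
   shortest walk has length < #|T|, so searching k in [0, #|T|) suffices;
   if x and y are disconnected the value is #|T| (meaningless: we only use
   it on connected graphs, where it is the true graph distance). *)
Definition dist (x y : T) : nat := find (fun k => walkb k x y) (iota 0 #|T|).

Definition connected_graph : Prop := forall x y : T, connect e x y.

Definition diameter : nat := \max_(x : T) \max_(y : T) dist x y.

Definition delta4 (a b c d : T) : nat :=
  let D1 := dist a b + dist c d in
  let D2 := dist a c + dist b d in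
  let D3 := dist a d + dist b c in
  let mx := maxn D1 (maxn D2 D3) in
  let mn := minn D1 (minn D2 D3) in
  let md := D1 + D2 + D3 - mx - mn in
  mx - md.

Definition hyperbolicity : nat :=
  \max_(a : T) \max_(b : T) \max_(c : T) \max_(d : T) delta4 a b c d.

End Graph.

(* Main.v *)
Require Import Defs.
From mathcomp Require Import all_boot.
From mathcomp Require Import zify.
Section S.
Set Implicit Arguments.
Variables (T : finType) (e : rel T).

Lemma walk_of x p : path e x p -> walkb e (size p) x (last x p).
Proof. move=> Hp; apply/existsP; exists (in_tuple p); by rewrite /= Hp eqxx. Qed.

Lemma walk_seq k x y : walkb e k x y -> exists2 p, path e x p & (size p = k /\ last x p = y).
Proof. by move/existsP=> [t /andP[Hp /eqP Hl]]; exists t => //; rewrite size_tuple. Qed.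

Lemma walk_dist k x y : walkb e k x y -> dist e x y <= k.
Proof.
move=> W; rewrite /dist; case: (ltnP k #|T|) => Hk.
  rewrite leqNgt; apply/negP => /(before_find 0); rewrite nth_iota // add0n W //.
by apply: leq_trans (find_size _ _) _; rewrite size_iota.
Qed.

Lemma dist_walk x y : connect e x y -> walkb e (dist e x y) x y.
Proof.
move/connectP=> [p Hp ->]; case: (shortenP Hp) => p' Hp' Hu _.
have Hs : size p' < #|T| by move/card_uniqP: Hu => /= Hc; have := max_card (mem (x :: p')); rewrite Hc.
have Hh : has (fun k => walkb e k x (last x p')) (iota 0 #|T|).
  by apply/hasP; exists (size p'); [rewrite mem_iota | apply: walk_of].
have Hf := Hh; rewrite has_find size_iota in Hf.
by have := nth_find 0 Hh; rewrite nth_iota ?add0n.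
Qed.

Lemma walk_cat k1 k2 x y z : walkb e k1 x y -> walkb e k2 y z -> walkb e (k1 + k2) x z.
Proof.
move=> /walk_seq [p Hp [<- Hl]] /walk_seq [q Hq [<- Hl']].
rewrite -size_cat -Hl' -Hl -last_cat; apply: walk_of; rewrite cat_path Hp /=.
by rewrite Hl.
Qed.

Hypothesis esym : symmetric e.

Lemma walk_rev k x y : walkb e k x y -> walkb e k y x.
Proof.
move=> /walk_seq [p Hp [<- <-]].
have -> : size p = size (rev (belast x p)) by rewrite size_rev size_belast.
have Hr : path e (last x p) (rev (belast x p)).
  rewrite rev_path; apply: sub_path Hp => u v; by rewrite esym.
have := walk_of _ _ Hr; congr walkb; case: p {Hp Hr} => //= u p.
by rewrite rev_cons last_rcons.
Qed.

Hypothesis conn : connected_graph e.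

Lemma dist_sym x y : dist e x y = dist e y x.
Proof.
apply/eqP; rewrite eqn_leq; apply/andP; split; apply: walk_dist; apply: walk_rev;
  apply: dist_walk; apply: conn.
Qed.

Lemma dist_tri x y z : dist e x z <= dist e x y + dist e y z.
Proof. apply: walk_dist; apply: walk_cat; apply: dist_walk; apply: conn. Qed.

Lemma dist_diam x y : dist e x y <= diameter e.
Proof.
rewrite /diameter; apply: leq_trans (leq_bigmax x); exact: (leq_bigmax (F := fun y => dist e x y) y).
Qed.
End S.
Lemma core (x1 x2 y1 y2 z1 z2 h : nat) :
  x1 <= h -> x2 <= h -> y1 <= h -> y2 <= h -> z1 <= h -> z2 <= h ->
  x1 <= y1 + z2 -> x1 <= z1 + y2 -> x2 <= y1 + z1 -> x2 <= z2 + y2 ->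
  x1 + x2 - maxn (y1 + y2) (z1 + z2) = h ->
  x1 = h /\ x2 = h /\ 2 * y1 = h /\ 2 * y2 = h /\ 2 * z1 = h /\ 2 * z2 = h.
Proof. move=> *; lia. Qed.
Lemma md3 (D1 D2 D3 : nat) :
  let mx := maxn D1 (maxn D2 D3) in
  let mn := minn D1 (minn D2 D3) in
  let md := D1 + D2 + D3 - mx - mn in
  [\/ D2 <= D1 /\ D3 <= D1 /\ mx - md = D1 - maxn D2 D3,
      D1 <= D2 /\ D3 <= D2 /\ mx - md = D2 - maxn D1 D3 |
      D1 <= D3 /\ D2 <= D3 /\ mx - md = D3 - maxn D1 D2].
Proof.
cbv zeta; case: (leqP D2 D1) => H1; case: (leqP D3 D1) => H2; case: (leqP D3 D2) => H3.
all: first [ apply: Or31; lia | apply: Or32; lia | apply: Or33; lia ].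
Qed.
Lemma arith (ab cd ac bd ad bc h : nat) :
  ab <= h -> cd <= h -> ac <= h -> bd <= h -> ad <= h -> bc <= h ->
  ab <= ac+bc -> ab <= ad+bd -> cd <= ac+ad -> cd <= bc+bd ->
  ac <= ab+bc -> ac <= ad+cd -> bd <= ab+ad -> bd <= bc+cd ->
  ad <= ab+bd -> ad <= ac+cd -> bc <= ab+ac -> bc <= bd+cd ->
  (let D1 := ab + cd in let D2 := ac + bd in let D3 := ad + bc in
  let mx := maxn D1 (maxn D2 D3) in
  let mn := minn D1 (minn D2 D3) in
  let md := D1 + D2 + D3 - mx - mn in mx - md) = h ->
  (ab = h /\ cd = h /\ 2 * ac = h /\ 2 * bd = h /\ 2 * ad = h /\ 2 * bc = h) \/
  (ac = h /\ bd = h /\ 2 * ab = h /\ 2 * cd = h /\ 2 * ad = h /\ 2 * bc = h) \/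
  (ad = h /\ bc = h /\ 2 * ab = h /\ 2 * cd = h /\ 2 * ac = h /\ 2 * bd = h).
Proof.
move=> B1 B2 B3 B4 B5 B6 T1 T2 T3 T4 T5 T6 T7 T8 T9 T10 T11 T12 Hd.
case: (md3 (ab+cd) (ac+bd) (ad+bc)) => [] [_ [_ E]]; cbv zeta in Hd; rewrite E in Hd.
- by left; apply: core.
- by right; left; apply: core.
- by right; right; apply: core.
Qed.
Theorem lemma2 (T : finType) (e : rel T) (h : nat) :
  symmetric e -> irreflexive e -> connected_graph e ->
  diameter e = h -> hyperbolicity e = h ->
  forall a b c d : T, delta4 e a b c d = h ->
  (* the matching {ab, cd} at distance h, the other four pairs at h/2 *)
  (dist e a b = h /\ dist e c d = h /\
   2 * dist e a c = h /\ 2 * dist e b d = h /\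
   2 * dist e a d = h /\ 2 * dist e b c = h) \/
  (* the matching {ac, bd} *)
  (dist e a c = h /\ dist e b d = h /\
   2 * dist e a b = h /\ 2 * dist e c d = h /\
   2 * dist e a d = h /\ 2 * dist e b c = h) \/
  (* the matching {ad, bc} *)
  (dist e a d = h /\ dist e b c = h /\
   2 * dist e a b = h /\ 2 * dist e c d = h /\
   2 * dist e a c = h /\ 2 * dist e b d = h).
Proof.
move=> es _ co Hd _ a b c d.
have S := dist_sym es co; have Tr := dist_tri co.
have B := @dist_diam T e; rewrite Hd in B.
rewrite /delta4 => H.
have T2 : forall x y z, dist e x z <= dist e x y + dist e z y by move=> x y z; rewrite (S z y).
have T3 : forall x y z, dist e x z <= dist e y x + dist e y z by move=> x y z; rewrite (S y x).
have T4 : forall x y z, dist e x z <= dist e y x + dist e z y by move=> x y z; rewrite (S y x) (S z y).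
apply: arith => //; first [ apply: Tr | apply: T2 | apply: T3 | apply: T4 ].
Qed.
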